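(* Let $r\in\mathbb{N}$ (so $n=r$), $\alpha>0$, $x_j=(j-1)/n$ and $c_j=x_j^\alpha$ for $j=1,\dots,n+1$. For $\lambda\ge 0$ let $m_j(\lambda)=e^{-\lambda c_j}/z(\lambda)$ with $z(\lambda)=\sum_{k=1}^{n+1}e^{-\lambda c_k}$, and $p_X^{\lambda}=\sum_{j=1}^{n+1}m_j(\lambda)\delta_{x_j}$. Then: (i) for every $\lambda\ge 0$, $i(x_j;p_X^{\lambda})=I(p_X^{\lambda})+\lambda\,\bigl(c_j-\mathbb{E}_{p_X^\lambda}[c(X)]\bigr)$ for all $j=1,\dots,n+1$; (ii) the function $\lambda\mapsto \mathbb{E}_{p_X^{\lambda}}[c(X)]=\sum_j m_j(\lambda)c_j$ satisfies $\frac{d}{d\lambda}\mathbb{E}_{p_X^{\lambda}}[c(X)]=-\mathrm{Var}_{p_X^{\lambda}}(c(X))<0$ on $[0,\infty)$, equals $\bar c^\ast$ at $\lambda=0$ and tends to $0$ as $\lambda\to\infty$. Consequently, for every $\bar c\in(0,\bar c^{\ast}]$ there is a unique $\lambda^{\ast}\ge 0$ with $\mathbb{E}_{p_X^{\lambda^\ast}}[c(X)]=\bar c$, and $p_X^{\lambda^\ast}$ satisfies $i(x;p_X^{\lambda^\ast})=I(p_X^{\lambda^\ast})+\lambda^\ast(c(x)-\bar c)$ for all $x$ in its support.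
   Context: Fix $b>0$ and set $r:=1/(2b)$, $n:=\lfloor r\rfloor$. Consider the additive uniform noise channel $Y=X+N$ with $N\sim\mathrm{Uniform}(-b,b)$ independent of $X$, so the transition density is $p_N(y\mid x)=r\,\mathbf{1}_{x-b<y<x+b}$. Admissible inputs are probability distributions $p_X$ on $[0,1]$. For such $p_X$ the output density is $p_Y(y;p_X)=\int p_N(y\mid x)\,dp_X(x)$, the marginal information density is $i(x;p_X)=\int p_N(y\mid x)\log\frac{p_N(y\mid x)}{p_Y(y;p_X)}\,dy\in[0,\infty]$, and $I(p_X)=\int i(x;p_X)\,dp_X(x)$ is the mutual information. The cost function is $c(x)=x^{\alpha}$. For $r\in\mathbb{N}$ the critical cost is $\bar c^\ast:=\frac{1}{n+1}\sum_{j=1}^{n+1}x_j^\alpha$ with $x_j=(j-1)/n$ (the expected cost under the capacity-achieving input without cost constraint, which is uniform on $\{x_1,\dots,x_{n+1}\}$). *)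

(* Defs.v *)
From HB Require Import structures.
From mathcomp Require Import all_boot all_order all_algebra.
From mathcomp Require Import all_classical all_reals all_analysis.
Set Implicit Arguments. Unset Strict Implicit. Unset Printing Implicit Defensive.
Import Order.TTheory GRing.Theory Num.Theory.
Import numFieldNormedType.Exports.
Local Open Scope ring_scope.

(* Transition density of the additive uniform noise channel Y = X + N,
   N ~ Uniform(-b,b):  p_N(y|x) = r 1_{x-b<y<x+b},  r = 1/(2b). *)
Definition pN {R : realType} (b : R) (y x : R) : R :=
  if (x - b < y) && (y < x + b) then (2 * b)^-1 else 0.

(* A (finitely supported) input distribution is given by k atoms xs i with
   weights w i :  p_X = \sum_i w i \delta_{xs i}. *)
Definition pY {R : realType} (b : R) (k : nat) (xs w : 'I_k -> R) (y : R) : R :=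
  \sum_(i < k) w i * pN b y (xs i).

Definition info_dens {R : realType} (b : R) (k : nat) (xs w : 'I_k -> R)
    (x : R) : \bar R :=
  (\int[@lebesgue_measure R]_y
     (if pN b y x == 0%R then 0%E
      else if pY b xs w y == 0%R then +oo%E
      else (pN b y x * ln (pN b y x / pY b xs w y))%:E))%E.

Definition mut_info {R : realType} (b : R) (k : nat) (xs w : 'I_k -> R) : \bar R :=
  (\sum_(i < k) (w i)%:E * info_dens b xs w (xs i))%E.

Definition cost {R : realType} (alpha x : R) : R := x `^ alpha.

(* grid points x_j = (j-1)/n, j = 1..n+1, indexed here by j : 'I_n.+1
   as x_j = j/n, j = 0..n *)
Definition xgrid {R : realType} (n : nat) (j : 'I_n.+1) : R := j%:R / n%:R.

Arguments xgrid {R} n j.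

Definition zpart {R : realType} (n : nat) (alpha lam : R) : R :=
  \sum_(k < n.+1) expR (- lam * cost alpha (xgrid n k)).

Definition gibbs {R : realType} (n : nat) (alpha lam : R) (j : 'I_n.+1) : R :=
  expR (- lam * cost alpha (xgrid n j)) / zpart n alpha lam.

Arguments gibbs {R} n alpha lam j.

Definition ecost {R : realType} (n : nat) (alpha lam : R) : R :=
  \sum_(j < n.+1) gibbs n alpha lam j * cost alpha (xgrid n j).

Definition vcost {R : realType} (n : nat) (alpha lam : R) : R :=
  \sum_(j < n.+1) gibbs n alpha lam j *
     (cost alpha (xgrid n j) - ecost n alpha lam) ^+ 2.

Definition cbarstar {R : realType} (n : nat) (alpha : R) : R :=
  (n.+1%:R)^-1 * \sum_(j < n.+1) cost alpha (xgrid n j).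

(* Main.v *)
Require Import Defs.
From HB Require Import structures.
From mathcomp Require Import all_boot all_order all_algebra.
From mathcomp Require Import all_classical all_reals all_analysis.
From mathcomp Require Import lra ring.
Import Order.TTheory GRing.Theory Num.Theory.
Import numFieldNormedType.Exports.
Local Open Scope ring_scope.
Local Open Scope classical_set_scope.


Lemma n_gt0 {R : realType} {b : R} {n} : 0 < b -> (2 * b)^-1 = n%:R -> (0 < n)%N.
Proof.
move=> hb hr; have : 0 < (2 * b)^-1 by rewrite invr_gt0 mulr_gt0.
by rewrite hr ltr0n.
Qed.

Lemma grid_sep {R : realType} {b : R} {n} (hb : 0 < b) (hr : (2 * b)^-1 = n%:R) {i j : 'I_n.+1} {y : R} :
  xgrid n i - b < y < xgrid n i + b -> xgrid n j - b < y < xgrid n j + b -> i = j.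
Proof.
move=> /andP[h1 h2] /andP[h3 h4].
have n0 := n_gt0 hb hr.
have nR : 0 < n%:R :> R by rewrite ltr0n.
have e2 : 2 * b = n%:R^-1 by rewrite -hr invrK.
have key : `|i%:R - j%:R| < 1 :> R.
  have : `|xgrid n i - xgrid n j| < 2 * b.
    rewrite ltr_norml; apply/andP; split; move: (xgrid n i) (xgrid n j) h1 h2 h3 h4; clear; move=> a c h1 h2 h3 h4; lra.
  rewrite e2 /xgrid -mulrBl normrM (gtr0_norm (x := n%:R^-1)) ?invr_gt0 //.
  by move=> h; move: h; rewrite -[X in _ < X]mul1r ltr_pM2r ?invr_gt0.
apply/val_inj/eqP; apply: contraTT key; rewrite -leNgt neq_ltn => /orP[hij|hij].
- rewrite distrC -natrB; last exact: ltnW. 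
  by rewrite ger0_norm ?ler0n // ler1n subn_gt0.
- rewrite -natrB; last exact: ltnW.
  by rewrite ger0_norm ?ler0n // ler1n subn_gt0.
Qed.
Lemma in_oo {R : realType} (a c y : R) : y \in `]a, c[%R -> a < y < c.
Proof. by rewrite in_itv. Qed.

Lemma pY_grid {R : realType} {b : R} {n} (hb : 0 < b) (hr : (2 * b)^-1 = n%:R)
  (w : 'I_n.+1 -> R) (j : 'I_n.+1) (y : R) :
  xgrid n j - b < y < xgrid n j + b -> pY b (xgrid n) w y = w j * n%:R.
Proof.
move=> h; rewrite /pY (bigD1 j) //= big1 ?addr0.
  by rewrite /pN h hr.
move=> i hij; rewrite /pN; case: ifP => [hi|_]; last by rewrite mulr0.
by move: hij; rewrite (grid_sep hb hr hi h) eqxx.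
Qed.

Lemma info_grid {R : realType} {b : R} {n} (hb : 0 < b) (hr : (2 * b)^-1 = n%:R)
  (w : 'I_n.+1 -> R) (j : 'I_n.+1) : 0 < w j ->
  info_dens b (xgrid n) w (xgrid n j) = (- ln (w j))%:E.
Proof.
move=> wj.
have n0 := n_gt0 hb hr.
have nR : 0 < n%:R :> R by rewrite ltr0n.
set x := xgrid n j.
set D := [set` `]x - b, x + b[%R ] : set R.
rewrite /info_dens.
transitivity (\int[lebesgue_measure]_(y in D) (cst ((- ln (w j)) * n%:R)%:E) y)%E.
  rewrite [RHS]integral_mkcond; apply: eq_integral => y _; rewrite /patch /=.
  case: (boolP (y \in D)) => yD.
  - have hy : x - b < y < x + b.
      move: yD; rewrite /D in_setE /=.
      exact: in_oo.
    have -> : pN b y x = n%:R by rewrite /pN hy hr.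
    rewrite (pY_grid hb hr w j y hy) (gt_eqF nR) (gt_eqF (mulr_gt0 wj nR)).
    by rewrite invfM mulrCA mulfV ?gt_eqF // mulr1 lnV ?posrE // mulrC.
  - have -> : pN b y x = 0.
      rewrite /pN; case: ifP => // hy; exfalso; move/negP: yD; apply.
      by rewrite /D in_setE /=.
    by rewrite eqxx.
rewrite integral_cst; last exact: measurable_itv.
rewrite /D.
have := lebesgue_measure_itv `]x - b, x + b[%R.
rewrite /= lte_fin ltrD2l gt0_cp // => ->.
rewrite -EFinD -EFinM; congr EFin; rewrite -hr.
have hb0 : 2 * b != 0 by rewrite gt_eqF // mulr_gt0.
have -> : x + b - (x - b) = 2 * b by move: (x) => x'; clear; lra.
by rewrite divfK.
Qed.

Lemma zpart_gt0 {R : realType} n alpha (lam : R) : 0 < zpart n alpha lam.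
Proof.
apply: (lt_le_trans (expR_gt0 (- lam * cost alpha (xgrid n ord0)))).
rewrite /zpart (bigD1 ord0) //= lerDl sumr_ge0 // => i _; exact: expR_ge0.
Qed.

Lemma gibbs_gt0 {R : realType} n alpha (lam : R) j : 0 < gibbs n alpha lam j.
Proof. by rewrite /gibbs divr_gt0 ?expR_gt0 ?zpart_gt0. Qed.

Lemma sum_gibbs {R : realType} n alpha (lam : R) : \sum_j gibbs n alpha lam j = 1.
Proof. by rewrite /gibbs -mulr_suml -/(zpart n alpha lam) mulfV // gt_eqF // zpart_gt0. Qed.

Lemma ln_gibbs {R : realType} n alpha (lam : R) j : ln (gibbs n alpha lam j) =
  - lam * cost alpha (xgrid n j) - ln (zpart n alpha lam).
Proof. by rewrite /gibbs ln_div ?posrE ?expR_gt0 ?zpart_gt0 // expRK. Qed.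

Lemma part_i {R : realType} {b : R} {n} (hb : 0 < b) (hr : (2 * b)^-1 = n%:R) alpha (lam : R) j :
  info_dens b (xgrid n) (gibbs n alpha lam) (xgrid n j) =
     (mut_info b (xgrid n) (gibbs n alpha lam)
      + (lam * (cost alpha (xgrid n j) - ecost n alpha lam))%:E)%E.
Proof.
rewrite (info_grid hb hr _ _ (gibbs_gt0 n alpha lam j)) /mut_info.
under eq_bigr => i _ do rewrite (info_grid hb hr _ _ (gibbs_gt0 n alpha lam i)) -EFinM.
rewrite sumEFin -EFinD; congr EFin.
under eq_bigr => i _ do rewrite ln_gibbs.
rewrite ln_gibbs.
set L := ln (zpart n alpha lam).
have -> : \sum_(i < n.+1) gibbs n alpha lam i * - (- lam * cost alpha (xgrid n i) - L)
   = lam * ecost n alpha lam + L.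
  rewrite /ecost mulr_sumr -[X in _ + X]mulr1 -(sum_gibbs n alpha lam) mulr_sumr -big_split /=.
  by apply: eq_bigr => i _; ring.
ring.
Qed.

Lemma is_derive_e {R : realType} (c lam : R) :
  is_derive lam 1 (fun l => expR (- l * c)) (- c * expR (- lam * c)).
Proof.
have -> : (fun l => expR (- l * c)) = expR \o ((- c) \*: @id R).
  by apply/funext => l /=; congr expR; rewrite mulrC mulrN -mulNr.
have h := is_derive1_comp (is_derive_expR _) (is_deriveZ (- c) (is_derive_id lam 1)).
apply: is_derive_eq h _.
rewrite /= (_ : (- c)%:A = - c); last exact: mulr1.
rewrite mulrC; congr (_ * expR _).
rewrite (_ : - c *: lam = - c * lam) //.
by rewrite !mulNr mulrC.
Qed.

Lemma is_derive_z {R : realType} n alpha (lam : R) : is_derive lam 1 (zpart n alpha)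
  (\sum_(k < n.+1) (- cost alpha (xgrid n k) * expR (- lam * cost alpha (xgrid n k)))).
Proof.
have -> : zpart n alpha = \sum_(k < n.+1) (fun l => expR (- l * cost alpha (xgrid n k))).
  by rewrite fct_sumE.
by apply: is_derive_sum => k; exact: is_derive_e.
Qed.

Lemma ecostE {R : realType} n alpha (lam : R) : ecost n alpha lam =
  (\sum_(k < n.+1) cost alpha (xgrid n k) * expR (- lam * cost alpha (xgrid n k)))
   / zpart n alpha lam.
Proof.
rewrite /ecost mulr_suml; apply: eq_bigr => k _; rewrite /gibbs.
by rewrite mulrC mulrA.
Qed.

Lemma is_derive_gibbs {R : realType} n alpha (lam : R) j :
  is_derive lam 1 (fun l => gibbs n alpha l j)
    (gibbs n alpha lam j * (ecost n alpha lam - cost alpha (xgrid n j))).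
Proof.
have -> : (fun l => gibbs n alpha l j) =
   (fun l => expR (- l * cost alpha (xgrid n j))) * (fun l => (zpart n alpha l)^-1).
  by apply/funext.
have h := is_deriveM (is_derive_e (cost alpha (xgrid n j)) lam)
   (@is_deriveV R (zpart n alpha) lam _ 1 (lt0r_neq0 (zpart_gt0 n alpha lam)) (is_derive_z n alpha lam)).
apply: is_derive_eq h _.
rewrite ecostE /gibbs /=.
under eq_bigr => k _ do rewrite mulNr.
rewrite sumrN.
set S := \sum_(k < n.+1) _.
set z := zpart n alpha lam.
have z0 : z != 0 by rewrite gt_eqF // zpart_gt0.
rewrite /GRing.scale /=.
field. all: by [].
Qed.

Lemma is_derive_ecost {R : realType} n alpha (lam : R) :
  is_derive lam 1 (ecost n alpha) (- vcost n alpha lam).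
Proof.
have -> : ecost n alpha = \sum_(j < n.+1)
    (cost alpha (xgrid n j) \*: (fun l => gibbs n alpha l j)).
  rewrite fct_sumE; apply/funext => l; rewrite /ecost; apply: eq_bigr => j _.
  by rewrite mulrC.
have h := is_derive_sum (fun j => is_deriveZ (cost alpha (xgrid n j)) (is_derive_gibbs n alpha lam j)).
apply: is_derive_eq h _.
set E := ecost n alpha lam.
apply/eqP; rewrite -addr_eq0; apply/eqP; rewrite /vcost -big_split /=.
rewrite (eq_bigr (fun j => E * E * gibbs n alpha lam j - E * (gibbs n alpha lam j * cost alpha (xgrid n j)))); last first.
  move=> j _ /=; have sE : forall a b : R, a *: b = a * b by [].
  rewrite sE -/E; ring.
rewrite big_split /= sumrN -!mulr_sumr sum_gibbs -/(ecost n alpha lam) -/E.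
by rewrite mulr1 subrr.
Qed.

Lemma cost0 {R : realType} n (alpha : R) : alpha != 0 -> cost alpha (xgrid n ord0) = 0.
Proof. by move=> a0; rewrite /cost /xgrid /= mul0r powR0. Qed.

Lemma costmax {R : realType} n (alpha : R) : (0 < n)%N -> cost alpha (xgrid n ord_max) = 1.
Proof.
move=> n0; rewrite /cost /xgrid /= divff ?pnatr_eq0 -?lt0n //.
by rewrite powR1.
Qed.

Lemma vcost_gt0 {R : realType} n (alpha lam : R) : (0 < n)%N -> alpha != 0 -> 0 < vcost n alpha lam.
Proof.
move=> n0 a0.
have hge : forall j : 'I_n.+1, true -> 0 <= gibbs n alpha lam j *
     (cost alpha (xgrid n j) - ecost n alpha lam) ^+ 2.
  by move=> j _; rewrite mulr_ge0 ?sqr_ge0 // ltW // gibbs_gt0.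
rewrite lt_def sumr_ge0 ?andbT //; apply/negP => /eqP.
move=> hs; have h := psumr_eq0P hge hs.
have := h ord0 isT; have := h ord_max isT.
rewrite cost0 // costmax //.
move=> /eqP; rewrite mulf_eq0 (gt_eqF (gibbs_gt0 _ _ _ _)) /= sqrf_eq0 subr_eq0 => /eqP h1.
move=> /eqP; rewrite mulf_eq0 (gt_eqF (gibbs_gt0 _ _ _ _)) /= sqrf_eq0 subr_eq0 => /eqP h0.
by move: h1; rewrite -h0 => /eqP; rewrite oner_eq0.
Qed.

Lemma ecost0 {R : realType} n (alpha : R) : ecost n alpha 0 = cbarstar n alpha.
Proof.
rewrite /ecost /cbarstar mulr_sumr; apply: eq_bigr => j _.
rewrite /gibbs /zpart.
under eq_bigr => k _ do rewrite oppr0 mul0r expR0.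
by rewrite oppr0 mul0r expR0 sumr_const card_ord div1r.
Qed.

Lemma term_bound {R : realType} n (alpha l : R) j : alpha != 0 -> 0 < l ->
  gibbs n alpha l j * cost alpha (xgrid n j) <= l^-1.
Proof.
move=> a0 l0.
set c := cost alpha (xgrid n j).
have c0 : 0 <= c by exact: powR_ge0.
have z1 : 1 <= zpart n alpha l.
  rewrite /zpart (bigD1 ord0) //= cost0 // mulr0 expR0 lerDl.
  by apply: sumr_ge0 => i _; exact: expR_ge0.
have ez : 0 < zpart n alpha l := zpart_gt0 n alpha l.
apply: (@le_trans _ _ (expR (- l * c) * c)).
  rewrite /gibbs mulrAC ler_pdivrMr //; apply: ler_peMr => //.
  by rewrite mulr_ge0 // expR_ge0.
have key : l * c <= expR (l * c).
  by have := expR_ge1Dx (l * c); move: (expR _) => E; lra.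
rewrite mulNr expRN ler_pdivrMl ?expR_gt0 // ler_pdivlMr // mulrC //.
Qed.

Lemma ecost_ge0 {R : realType} n (alpha l : R) : 0 <= ecost n alpha l.
Proof.
by apply: sumr_ge0 => j _; rewrite mulr_ge0 ?powR_ge0 // ltW // gibbs_gt0.
Qed.

Lemma ecost_lim {R : realType} n (alpha : R) : alpha != 0 ->
  ecost n alpha lam @[lam --> +oo] --> 0.
Proof.
move=> a0; apply/cvgr0Pnorm_lt => e e0.
exists (n.+1%:R / e); split; first by rewrite num_real.
move=> l hl.
have l0 : 0 < l by apply: lt_trans hl; rewrite divr_gt0.
rewrite ger0_norm ?ecost_ge0 //.
apply: (@le_lt_trans _ _ (\sum_(j < n.+1) l^-1)).
  by apply: ler_sum => j _; exact: term_bound.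
rewrite sumr_const card_ord -mulr_natl.
by rewrite ltr_pdivrMr // mulrC -ltr_pdivrMr.
Qed.

Lemma ecost_cont {R : realType} n (alpha : R) : continuous (ecost n alpha).
Proof.
move=> r; apply/differentiable_continuous/derivable1_diffP.
by case: (is_derive_ecost n alpha r).
Qed.

Lemma ecost_decr {R : realType} n (alpha a c : R) : (0 < n)%N -> alpha != 0 -> a < c ->
  ecost n alpha c < ecost n alpha a.
Proof.
move=> n0 a0 ac.
have [x _ h] := @MVT R (ecost n alpha) (fun x => - vcost n alpha x) a c ac
  (fun x _ => is_derive_ecost n alpha x)
  (continuous_subspaceT (@ecost_cont R n alpha)).
by rewrite -subr_lt0 h mulNr oppr_lt0 mulr_gt0 ?vcost_gt0 // subr_gt0.
Qed.
Theorem mainTheorem4 (R : realType) (b : R) (n : nat) (alpha : R)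
  (hb : 0 < b) (hr : (2 * b)^-1 = n%:R) (halpha : 0 < alpha) :
  (* (i) *)
  (forall lam : R, 0 <= lam -> forall j : 'I_n.+1,
     info_dens b (xgrid n) (gibbs n alpha lam) (xgrid n j) =
     (mut_info b (xgrid n) (gibbs n alpha lam)
      + (lam * (cost alpha (xgrid n j) - ecost n alpha lam))%:E)%E) /\
  (* (ii) *)
  (forall lam : R, 0 <= lam ->
     is_derive lam 1 (ecost n alpha) (- vcost n alpha lam) /\
     - vcost n alpha lam < 0) /\
  ecost n alpha 0 = cbarstar n alpha /\
  (ecost n alpha lam @[lam --> +oo] --> 0) /\
  (* consequence *)
  (forall cbar : R, 0 < cbar <= cbarstar n alpha ->
     exists lamstar : R,
       (0 <= lamstar /\ ecost n alpha lamstar = cbar) /\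
       (forall mu : R, 0 <= mu -> ecost n alpha mu = cbar -> mu = lamstar) /\
       (forall j : 'I_n.+1, 0 < gibbs n alpha lamstar j ->
          info_dens b (xgrid n) (gibbs n alpha lamstar) (xgrid n j) =
          (mut_info b (xgrid n) (gibbs n alpha lamstar)
           + (lamstar * (cost alpha (xgrid n j) - cbar))%:E)%E)).
Proof.
have n0 := n_gt0 hb hr.
have a0 : alpha != 0 by rewrite gt_eqF.
split; first by move=> lam _ j; exact: part_i.
split; first by move=> lam _; split; [exact: is_derive_ecost | rewrite oppr_lt0 vcost_gt0].
split; first exact: ecost0.
split; first exact: ecost_lim.
move=> cbar /andP[c0 cle].
have := ecost_lim n alpha a0; move/cvgr0Pnorm_lt => /(_ cbar c0) [M [_ HM]].
set L := Num.max M 0 + 1.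
have ML : M < L by rewrite /L ltr_pwDr // le_max lexx.
have L0 : 0 <= L by rewrite /L addr_ge0 // le_max lexx orbT.
have hL : ecost n alpha L < cbar.
  by have := HM L ML; rewrite /= ger0_norm ?ecost_ge0.
have hmm : Num.min (ecost n alpha 0) (ecost n alpha L) <= cbar <=
    Num.max (ecost n alpha 0) (ecost n alpha L).
  by rewrite ge_min le_max (ltW hL) /= ecost0 cle orbT.
have [ls lsI els] := @IVT R (ecost n alpha) 0 L cbar L0
  (continuous_subspaceT (@ecost_cont R n alpha)) hmm.
have ls0 : 0 <= ls by move: lsI; rewrite in_itv /= => /andP[].
exists ls; split; first by [].
split.
  move=> mu mu0 emu; apply/eqP; rewrite eq_le; apply/andP; split; rewrite leNgt; apply/negP => h.
  - by have := @ecost_decr R n alpha _ _ n0 a0 h; rewrite els emu ltxx.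
  - by have := @ecost_decr R n alpha _ _ n0 a0 h; rewrite els emu ltxx.
move=> j _; rewrite part_i // els //.
Qed.
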